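(* In every state $\mathbf{x}$ of the common-chunk-protocol Markov process (with $k\ge 2$ chunks and any $\lambda>0$), for every chunk $i\in\{1,\dots,k\}$, \[ r\;\ge\;\frac{\bar S_i}{6}\, dS_i^+ \qquad\text{and}\qquad dS_i^+\le \frac{\bar S_i}{S}. \]
   Context: Model: Fix an integer $k\ge 2$ (number of chunks of a file) and $\lambda>0$. There is always exactly one seed holding all $k$ chunks. Non-seed peers arrive according to a Poisson process of rate $\lambda$, each arriving with no chunks; each non-seed peer holds a subset (its profile) of $\{1,\dots,k\}$ and leaves the system immediately once it holds all $k$ chunks. The state $\mathbf{x}$ of the continuous-time Markov process is the number of non-seed peers with each profile. $S$ denotes the total number of peers present, including the seed. Each non-seed peer has an independent rate-1 Poisson clock; at each tick it draws a sample of peers independently and uniformly at random with replacement from the current $S$ peers (seed and itself included) and may instantaneously download at most one chunk that it lacks and that is held by some sampled peer (such a chunk is a ''match''). Counting draws with multiplicity, a chunk is ''rare'' in a sample of 3 draws if exactly one of the 3 draws holds it. Common chunk protocol: (i) a peer with no chunks draws 3 peers and downloads a chunk chosen uniformly among the rare matches, if there is any, otherwise nothing; (ii) a peer holding at least 1 and at most $k-2$ chunks draws 1 peer and downloads a uniformly chosen match, if any, otherwise nothing; (iii) a peer holding exactly $k-1$ chunks draws 3 peers and downloads its missing chunk only if that chunk is held by some draw and every chunk it holds is held by at least 2 of the 3 draws; otherwise nothing. Notation: $S_i$ ($1\le i\le k$) is the number of peers, including the seed, holding chunk $i$; $\bar S_i=S-S_i$. $r=r(\mathbf{x})$ is the total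 rate of download events in state $\mathbf{x}$, i.e. the sum over all non-seed peers of the probability that a clock tick of that peer results in a download. $dS_i^+=dS_i^+(\mathbf{x})$ is the probability that a clock tick of a peer holding no chunks results in that peer downloading chunk $i$. *)

(* Defs.v *)
From HB Require Import structures.
From mathcomp Require Import all_boot all_order all_algebra.
Set Implicit Arguments. Unset Strict Implicit. Unset Printing Implicit Defensive.
Import Order.TTheory GRing.Theory Num.Theory.
Local Open Scope ring_scope.

(* Chunks are 'I_k (0-based).  A state x assigns
   to every profile the number of NON-seed peers with that profile; peers
   holding all chunks leave, so a valid state has x setT = 0. *)

(* number of peers (seed included) with profile A *)
Definition weight (k : nat) (x : {set 'I_k} -> nat) (A : {set 'I_k}) : nat :=
  (x A + (A == setT))%N.

Definition Stot (k : nat) (x : {set 'I_k} -> nat) : nat :=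
  (\sum_(A : {set 'I_k}) weight x A)%N.

Definition Shold (k : nat) (x : {set 'I_k} -> nat) (i : 'I_k) : nat :=
  (\sum_(A : {set 'I_k} | i \in A) weight x A)%N.

Definition Sbar (k : nat) (x : {set 'I_k} -> nat) (i : 'I_k) : nat :=
  (Stot x - Shold x i)%N.

Definition nhold (k : nat) (A B C : {set 'I_k}) (j : 'I_k) : nat :=
  ((j \in A) + (j \in B) + (j \in C))%N.

Definition rare (k : nat) (A B C : {set 'I_k}) (j : 'I_k) : bool :=
  nhold A B C j == 1%N.

Definition prob1 (R : realFieldType) (k : nat) (x : {set 'I_k} -> nat)
  (A : {set 'I_k}) : R := (weight x A)%:R / (Stot x)%:R.

Definition prob3 (R : realFieldType) (k : nat) (x : {set 'I_k} -> nat)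
  (A B C : {set 'I_k}) : R := prob1 R x A * prob1 R x B * prob1 R x C.

(* dS_i^+ : probability that a tick of a peer holding no chunks results in
   downloading chunk i (uniform choice among the rare matches). *)
Definition dSplus (R : realFieldType) (k : nat) (x : {set 'I_k} -> nat)
  (i : 'I_k) : R :=
  \sum_(A : {set 'I_k}) \sum_(B : {set 'I_k}) \sum_(C : {set 'I_k})
    prob3 R x A B C *
    (if rare A B C i then ((#|[set j | rare A B C j]|)%:R)^-1 else 0).

(* probability that a clock tick of a non-seed peer with profile P results
   in a download, under the common chunk protocol *)
Definition pdl (R : realFieldType) (k : nat) (x : {set 'I_k} -> nat)
  (P : {set 'I_k}) : R :=
  if #|P| == 0%N then
    \sum_(A : {set 'I_k}) \sum_(B : {set 'I_k}) \sum_(C : {set 'I_k})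
      prob3 R x A B C * (nat_of_bool [exists j, rare A B C j])%:R
  else if (#|P| <= k - 2)%N then
    \sum_(A : {set 'I_k}) prob1 R x A * (nat_of_bool (~~ (A \subset P)))%:R
  else
    (* (iii) |P| = k-1: 3 draws, missing chunk held by some draw and every
       held chunk held by at least 2 of the 3 draws *)
    \sum_(A : {set 'I_k}) \sum_(B : {set 'I_k}) \sum_(C : {set 'I_k})
      prob3 R x A B C *
      (nat_of_bool ([exists j, (j \notin P) && (0 < nhold A B C j)%N] &&
                    [forall j, (j \in P) ==> (2 <= nhold A B C j)%N]))%:R.

Definition rate (R : realFieldType) (k : nat) (x : {set 'I_k} -> nat) : R :=
  \sum_(P : {set 'I_k} | P != setT) (x P)%:R * pdl R x P.

(* Main.v *)
Require Import Defs.
From HB Require Import structures.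
From mathcomp Require Import all_boot all_order all_algebra.
From mathcomp Require Import ring lra zify.
Import Order.TTheory GRing.Theory Num.Theory.
Set Implicit Arguments. Unset Strict Implicit. Unset Printing Implicit Defensive.
Local Open Scope ring_scope.

Definition sum3 (R : realFieldType) (k : nat)
  (F : {set 'I_k} -> {set 'I_k} -> {set 'I_k} -> R) : R :=
  \sum_(A : {set 'I_k}) \sum_(B : {set 'I_k}) \sum_(C : {set 'I_k}) F A B C.

Lemma sum3D (R : realFieldType) (k : nat) (F G : {set 'I_k} -> {set 'I_k} -> {set 'I_k} -> R) :
  sum3 (fun A B C => F A B C + G A B C) = sum3 F + sum3 G.
Proof.
rewrite /sum3 -big_split; apply: eq_bigr => A _.
rewrite -big_split; apply: eq_bigr => B _; by rewrite -big_split.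
Qed.

Lemma sum3_le (R : realFieldType) (k : nat) (F G : {set 'I_k} -> {set 'I_k} -> {set 'I_k} -> R) :
  (forall A B C, F A B C <= G A B C) -> sum3 F <= sum3 G.
Proof.
move=> H; rewrite /sum3; apply: ler_sum => A _; apply: ler_sum => B _;
  apply: ler_sum => C _; exact: H.
Qed.

Lemma sum3_ext (R : realFieldType) (k : nat) (F G : {set 'I_k} -> {set 'I_k} -> {set 'I_k} -> R) :
  (forall A B C, F A B C = G A B C) -> sum3 F = sum3 G.
Proof.
move=> H; rewrite /sum3; apply: eq_bigr => A _; apply: eq_bigr => B _;
  apply: eq_bigr => C _; exact: H.
Qed.

Lemma sum3_fact (R : realFieldType) (k : nat) (x : {set 'I_k} -> nat)
  (f g h : {set 'I_k} -> R) :
  sum3 (fun A B C => prob3 R x A B C * (f A * g B * h C)) =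
  (\sum_A prob1 R x A * f A) * (\sum_B prob1 R x B * g B) *
  (\sum_C prob1 R x C * h C).
Proof.
rewrite big_distrlr /= big_distrl /=; apply: eq_bigr => A _.
rewrite big_distrl /=; apply: eq_bigr => B _.
rewrite big_distrr /=; apply: eq_bigr => C _.
rewrite /prob3; ring.
Qed.

Lemma Stot_pos (k : nat) (x : {set 'I_k} -> nat) : (0 < Stot x)%N.
Proof.
rewrite /Stot (bigD1 setT) //= /weight eqxx; by rewrite addn1.
Qed.

Lemma weightE (k : nat) (x : {set 'I_k} -> nat) A : A != setT -> weight x A = x A.
Proof. by move=> /negbTE h; rewrite /weight h addn0. Qed.

Lemma mass (R : realFieldType) (k : nat) (x : {set 'I_k} -> nat) (P : pred {set 'I_k}) :
  \sum_A prob1 R x A * (P A)%:R = (\sum_(A | P A) weight x A)%:R / (Stot x)%:R.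
Proof.
rewrite natr_sum mulr_suml [in RHS]big_mkcond /=; apply: eq_bigr => A _.
rewrite /prob1; case: (P A) => /=; rewrite ?mulr1 ?mulr0 ?mul0r //.
Qed.

Lemma Stot_split (k : nat) (x : {set 'I_k} -> nat) (i : 'I_k) :
  Stot x = (Shold x i + \sum_(A : {set 'I_k} | i \notin A) weight x A)%N.
Proof. by rewrite /Stot /Shold (bigID (fun A : {set 'I_k} => i \in A)). Qed.

Lemma Sbar_sum (k : nat) (x : {set 'I_k} -> nat) (i : 'I_k) :
  Sbar x i = (\sum_(A : {set 'I_k} | i \notin A) weight x A)%N.
Proof. by rewrite /Sbar (Stot_split x i) addKn. Qed.

Lemma prob1_ge0 (R : realFieldType) (k : nat) (x : {set 'I_k} -> nat) A :
  0 <= prob1 R x A.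
Proof. by rewrite /prob1 divr_ge0 ?ler0n. Qed.

Lemma prob3_ge0 (R : realFieldType) (k : nat) (x : {set 'I_k} -> nat) A B C :
  0 <= prob3 R x A B C.
Proof. by rewrite /prob3; apply: mulr_ge0; [apply: mulr_ge0|]; apply: prob1_ge0. Qed.

Lemma pdl_ge0 (R : realFieldType) (k : nat) (x : {set 'I_k} -> nat) P :
  0 <= pdl R x P.
Proof.
rewrite /pdl; case: ifP => _; last case: ifP => _;
  repeat (apply: sumr_ge0 => ? _); apply: mulr_ge0;
  rewrite ?ler0n //; [exact: prob3_ge0|exact: prob1_ge0|exact: prob3_ge0].
Qed.

Lemma mass_in (R : realFieldType) (k : nat) (x : {set 'I_k} -> nat) (i : 'I_k) :
  \sum_A prob1 R x A * (i \in A)%:R = (Shold x i)%:R / (Stot x)%:R.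
Proof. by rewrite (mass R x (fun A => i \in A)). Qed.

Lemma mass_notin (R : realFieldType) (k : nat) (x : {set 'I_k} -> nat) (i : 'I_k) :
  \sum_A prob1 R x A * (i \notin A)%:R = (Sbar x i)%:R / (Stot x)%:R.
Proof. by rewrite (mass R x (fun A => i \notin A)) Sbar_sum. Qed.

Lemma rare_ind (R : realFieldType) (k : nat) (A B C : {set 'I_k}) (i : 'I_k) :
  ((rare A B C i)%:R : R) =
  (i \in A)%:R * (i \notin B)%:R * (i \notin C)%:R +
  (i \notin A)%:R * (i \in B)%:R * (i \notin C)%:R +
  (i \notin A)%:R * (i \notin B)%:R * (i \in C)%:R.
Proof.
rewrite /rare /nhold; case: (i \in A); case: (i \in B); case: (i \in C) => /=;
  rewrite ?mulr0 ?mul0r ?mulr1 ?mul1r ?addr0 ?add0r //.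
Qed.

Lemma sum3_rare (R : realFieldType) (k : nat) (x : {set 'I_k} -> nat) (i : 'I_k) :
  sum3 (fun A B C => prob3 R x A B C * (rare A B C i)%:R) =
  3 * ((Shold x i)%:R / (Stot x)%:R) * ((Sbar x i)%:R / (Stot x)%:R) ^+ 2.
Proof.
rewrite (@sum3_ext _ _ _
  (fun A B C => (prob3 R x A B C * ((i \in A)%:R * (i \notin B)%:R * (i \notin C)%:R) +
  prob3 R x A B C * ((i \notin A)%:R * (i \in B)%:R * (i \notin C)%:R)) +
  prob3 R x A B C * ((i \notin A)%:R * (i \notin B)%:R * (i \in C)%:R))); last by move=> A B C; rewrite rare_ind !mulrDr.
rewrite !sum3D !sum3_fact mass_in mass_notin; ring.
Qed.

Lemma dS_le (R : realFieldType) (k : nat) (x : {set 'I_k} -> nat) (i : 'I_k) :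
  dSplus R x i <=
  3 * ((Shold x i)%:R / (Stot x)%:R) * ((Sbar x i)%:R / (Stot x)%:R) ^+ 2.
Proof.
rewrite -sum3_rare; apply: sum3_le => A B C.
apply: ler_wpM2l; first exact: prob3_ge0.
case: ifP => hr; last by rewrite ler0n.
rewrite /= invf_le1 ?ler1n ?ltr0n; apply/card_gt0P; exists i; by rewrite inE.
Qed.

Lemma split_n (R : realFieldType) (k : nat) (x : {set 'I_k} -> nat) (i : 'I_k) :
  (Shold x i)%:R / (Stot x)%:R + (Sbar x i)%:R / (Stot x)%:R = 1 :> R.
Proof.
have hn : (Stot x)%:R != 0 :> R by rewrite pnatr_eq0 -lt0n Stot_pos.
by rewrite -mulrDl -natrD Sbar_sum -Stot_split divff.
Qed.

Lemma sub_notin (k : nat) (P : {set 'I_k}) (i : 'I_k) : i \notin P -> P \subset [set~ i].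
Proof.
move=> hi; apply/subsetP => j hj; rewrite !inE; apply/eqP => e; subst j.
by rewrite hj in hi.
Qed.

Lemma card_Q (k : nat) (i : 'I_k) : #|[set~ i]| = k.-1.
Proof. by rewrite cardsC1 card_ord. Qed.

Lemma pdl_other (R : realFieldType) (k : nat) (x : {set 'I_k} -> nat) (i : 'I_k)
  (P : {set 'I_k}) : (2 <= k)%N -> i \notin P -> P != [set~ i] ->
  ((Shold x i)%:R / (Stot x)%:R) * ((Sbar x i)%:R / (Stot x)%:R) ^+ 2 <= pdl R x P.
Proof.
move=> hk hiP hPQ.
have hp : 0 <= (Shold x i)%:R / (Stot x)%:R :> R by rewrite divr_ge0 ?ler0n.
have hu : 0 <= (Sbar x i)%:R / (Stot x)%:R :> R by rewrite divr_ge0 ?ler0n.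
have hs := split_n R x i.
rewrite /pdl; case: ifP => h0.
  apply: le_trans (_ : 3 * ((Shold x i)%:R / (Stot x)%:R) *
       ((Sbar x i)%:R / (Stot x)%:R) ^+ 2 <= _).
    set p := _ / _ in hp hs *; set u := _ / _ in hu hs *.
    have : 0 <= p * u ^+ 2 by rewrite mulr_ge0 // exprn_ge0.
    lra.
  rewrite -sum3_rare; apply: sum3_le => A B C.
  apply: ler_wpM2l; first exact: prob3_ge0.
  case: (boolP (rare A B C i)) => hr; last by rewrite ler0n.
  rewrite (_ : [exists j, rare A B C j] = true) //; apply/existsP; by exists i.
case: ifP => h1.
  apply: le_trans (_ : (Shold x i)%:R / (Stot x)%:R <= _).
    set p := _ / _ in hp hs *; set u := _ / _ in hu hs *.
    have hu1 : u <= 1 by lra.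
    have : u ^+ 2 <= 1 by rewrite expr_le1.
    by move=> h; rewrite -[X in _ <= X]mulr1 ler_wpM2l.
  rewrite -mass_in; apply: ler_sum => A _; apply: ler_wpM2l; first exact: prob1_ge0.
  case: (boolP (i \in A)) => hA; last by rewrite ler0n.
  rewrite (_ : ~~ (A \subset P) = true) //; apply/negP => /subsetP /(_ i hA).
  by rewrite (negbTE hiP).
exfalso; move/negP: hPQ; apply; rewrite eqEcard sub_notin //= card_Q.
move/negbT: h1; rewrite -ltnNge; move: (#|P|) => c.
case: k hk {i x P hiP h0 hs hp hu} => // k' _.
move=> h; lia.
Qed.

Lemma mass_eq (R : realFieldType) (k : nat) (x : {set 'I_k} -> nat) (Q : {set 'I_k}) :
  Q != setT -> \sum_A prob1 R x A * (A == Q)%:R = (x Q)%:R / (Stot x)%:R.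
Proof.
move=> hQ; rewrite (mass R x (fun A => A == Q)) big_pred1_eq weightE //.
Qed.

Lemma cond_ok (k : nat) (i : 'I_k) (A B C : {set 'I_k}) :
  (2 <= (A == [set~ i]) + (B == [set~ i]) + (C == [set~ i]))%N ->
  (i \in A) || (i \in B) || (i \in C) ->
  [exists j, (j \notin [set~ i]) && (0 < nhold A B C j)%N] &&
  [forall j, (j \in [set~ i]) ==> (2 <= nhold A B C j)%N].
Proof.
move=> h2 hi; apply/andP; split.
  apply/existsP; exists i; rewrite !inE eqxx /= /nhold.
  by move: hi; case: (i \in A); case: (i \in B); case: (i \in C).
apply/forallP => j; apply/implyP => hj.
have le1 : forall D : {set 'I_k}, ((D == [set~ i]) <= (j \in D))%N.
  by move=> D; case: eqP => // ->; rewrite hj.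
apply: leq_trans h2 _; rewrite /nhold; by rewrite !leq_add.
Qed.

Lemma pdl_Q (R : realFieldType) (k : nat) (x : {set 'I_k} -> nat) (i : 'I_k) :
  (2 <= k)%N ->
  3 * ((x [set~ i])%:R / (Stot x)%:R) ^+ 2 * ((Shold x i)%:R / (Stot x)%:R)
  <= pdl R x [set~ i].
Proof.
move=> hk.
set Q := [set~ i].
have iQ : (i \in Q) = false by rewrite !inE eqxx.
have hQT : Q != setT by apply/negP => /eqP hQ; move: iQ; rewrite hQ inE.
rewrite /pdl card_Q (_ : (k.-1 == 0)%N = false); last by lia.
rewrite (_ : (k.-1 <= k - 2)%N = false); last by lia.
apply: le_trans (_ : sum3 (fun A B C => (prob3 R x A B C * ((A == Q)%:R * (B == Q)%:R * (i \in C)%:R) +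
  prob3 R x A B C * ((A == Q)%:R * (i \in B)%:R * (C == Q)%:R)) +
  prob3 R x A B C * ((i \in A)%:R * (B == Q)%:R * (C == Q)%:R)) <= _).
  rewrite !sum3D !sum3_fact mass_in mass_eq //; lra.
apply: sum3_le => A B C; rewrite -!mulrDr; apply: ler_wpM2l; first exact: prob3_ge0.
case: (eqVneq A Q) => [->|nA]; case: (eqVneq B Q) => [->|nB];
  case: (eqVneq C Q) => [->|nC]; rewrite ?iQ /= ?mulr0 ?mul0r ?addr0 ?add0r ?mulr1 ?mul1r ?ler0n //.
- case Hmem: (i \in C); rewrite ?ler0n // cond_ok /Q ?eqxx ?Hmem ?orbT //; lia.
- case Hmem: (i \in B); rewrite ?ler0n // cond_ok /Q ?eqxx ?Hmem ?orbT //; lia.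
- case Hmem: (i \in A); rewrite ?ler0n // cond_ok /Q ?eqxx ?Hmem ?orbT //; lia.
Qed.

Lemma final_ineq (R : realFieldType) (n a r p : R) :
  0 < n -> 0 <= a -> 0 <= r -> 0 <= p ->
  (a + r) / 6 * (3 * p * ((a + r) / n) ^+ 2) <=
  a * (3 * (a / n) ^+ 2 * p) + r * (p * ((a + r) / n) ^+ 2).
Proof.
move=> hn ha hr hp.
have hn0 : n != 0 by rewrite gt_eqF.
rewrite (_ : (a + r) / 6 * (3 * p * ((a + r) / n) ^+ 2) =
   (p * (a + r) ^+ 3 / 2) / n ^+ 2); last by field.
rewrite (_ : a * (3 * (a / n) ^+ 2 * p) + r * (p * ((a + r) / n) ^+ 2) =
   (p * (3 * a ^+ 3 + r * (a + r) ^+ 2)) / n ^+ 2); last by field.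
apply: ler_wpM2r; first by rewrite invr_ge0 exprn_ge0 // ltW.
have h1 : 0 <= p * ((a - (a + r) / 3) ^+ 2 * (3 * a + 2 * (a + r))).
  by rewrite mulr_ge0 // mulr_ge0 ?sqr_ge0 //; lra.
have h2 : 0 <= p * (a + r) ^+ 3 by rewrite mulr_ge0 // exprn_ge0 //; lra.
have -> : p * (3 * a ^+ 3 + r * (a + r) ^+ 2) =
   p * (a + r) ^+ 3 / 2 + (p * ((a - (a + r) / 3) ^+ 2 * (3 * a + 2 * (a + r))) +
   5 / 18 * (p * (a + r) ^+ 3)) by field.
lra.
Qed.

Unset Implicit Arguments.

Theorem mainTheorem4 (R : realFieldType) (k : nat) (lambda : R)
  (hk : (2 <= k)%N) (hlambda : 0 < lambda)
  (x : {set 'I_k} -> nat) (hx : x setT = 0%N) (i : 'I_k) :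
  (Sbar x i)%:R / 6 * dSplus R x i <= rate R x /\
  dSplus R x i <= (Sbar x i)%:R / (Stot x)%:R.
Proof.
have hn : 0 < (Stot x)%:R :> R by rewrite ltr0n Stot_pos.
have hp : 0 <= (Shold x i)%:R / (Stot x)%:R :> R by rewrite divr_ge0 ?ler0n.
have hu : 0 <= (Sbar x i)%:R / (Stot x)%:R :> R by rewrite divr_ge0 ?ler0n.
have hs := split_n R x i.
have hdS := dS_le R x i.
split; last first.
  apply: le_trans hdS _.
  move: hp hu hs; set p := _ / _; set u := _ / _ => hp hu hs.
  have : 0 <= u * (1 - 3 * p * u) by apply: mulr_ge0 => //; nra.
  nra.
set Q := [set~ i].
have iQ : (i \in Q) = false by rewrite !inE eqxx.
pose rest := (\sum_(P : {set 'I_k} | (i \notin P) && (P != Q)) x P)%N.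
have hb : Sbar x i = (x Q + rest)%N.
  rewrite Sbar_sum (bigD1 Q) ?iQ //= weightE; last first.
    by apply/negP => /eqP hQ; move: iQ; rewrite hQ inE.
  congr (_ + _)%N; apply: eq_bigr => P /andP [hP _]; apply: weightE.
  by apply/negP => /eqP hPT; move: hP; rewrite hPT inE.
have hrate : (x Q)%:R * pdl R x Q + rest%:R *
    ((Shold x i)%:R / (Stot x)%:R * ((Sbar x i)%:R / (Stot x)%:R) ^+ 2) <= rate R x.
  apply: le_trans (_ : \sum_(P : {set 'I_k} | i \notin P) (x P)%:R * pdl R x P <= _).
    rewrite (bigD1 Q) ?iQ //= lerD2l /rest natr_sum mulr_suml.
    apply: ler_sum => P /andP [hP hPQ]; apply: ler_wpM2l; first by rewrite ler0n.
    exact: pdl_other.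
  rewrite /rate [X in _ <= X]big_mkcond [X in X <= _]big_mkcond /=.
  apply: ler_sum => P _; case: (boolP (i \in P)) => hP /=.
    by case: ifP => _ //; rewrite mulr_ge0 ?ler0n ?pdl_ge0.
  rewrite ifT //; apply/negP => /eqP hPT; move: hP; by rewrite hPT inE.
apply: le_trans hrate.
apply: le_trans (_ : (Sbar x i)%:R / 6 * (3 * ((Shold x i)%:R / (Stot x)%:R) *
   ((Sbar x i)%:R / (Stot x)%:R) ^+ 2) <= _).
  by apply: ler_wpM2l => //; rewrite divr_ge0 ?ler0n.
apply: le_trans (_ : (x Q)%:R * (3 * ((x Q)%:R / (Stot x)%:R) ^+ 2 *
   ((Shold x i)%:R / (Stot x)%:R)) + rest%:R *
    ((Shold x i)%:R / (Stot x)%:R * ((Sbar x i)%:R / (Stot x)%:R) ^+ 2) <= _);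
  last first.
  by rewrite lerD2r; apply: ler_wpM2l; [rewrite ler0n | exact: pdl_Q].
rewrite hb natrD; apply: final_ineq => //; by rewrite ler0n.
Qed.
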